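(* Let $\tau\in\mathbb{C}$. The functional $I_{\overline{\mathcal{T}}}:\phi\mapsto\beta_{f_\phi}(\tau)$ is continuous on $\overline{\mathcal{T}}$ (closure taken in the Banach space $E_1$).
   Context: $\Delta$ is the unit disk. $E_1$ is the Banach space of analytic $\phi$ on $\Delta$ with $\|\phi\|_{E_1}=\sup_{z\in\Delta}|\phi(z)|(1-|z|^2)<\infty$. For locally univalent $f$, $N_f=f''/f'$. $\mathcal{S}_q$ is the class of bounded univalent $f$ on $\Delta$ with $f(0)=0,f'(0)=1$ admitting a quasiconformal extension to $\widehat{\mathbb{C}}$. $\mathcal{T}=\{N_f:f\in\mathcal{S}_q\}\subset E_1$ and $\overline{\mathcal{T}}$ is its closure in $E_1$. For $\phi\in\overline{\mathcal{T}}$, $f_\phi(z)=\int_0^z\exp\left(\int_0^\zeta\phi(w)dw\right)d\zeta$; this is univalent in $\Delta$ with $f_\phi(0)=0,f_\phi'(0)=1$ and $N_{f_\phi}=\phi$. For such $f$ and $\tau\in\mathbb{C}$, $[f'(z)]^\tau=\exp(\tau\log f'(z))$ with $\log f'(0)=0$, and $\beta_f(\tau)=\limsup_{r\to1^-}\frac{\log\int_{-\pi}^{\pi}|[f'(re^{i\theta})]^\tau|d\theta}{|\log(1-r)|}$. *)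

(* Defs.v *)
From Stdlib Require Import Reals.
From Coquelicot Require Import Coquelicot.
Open Scope R_scope.

Definition Disk (z : C) : Prop := Cmod z < 1.

Definition cexp (z : C) : C :=
  (exp (fst z) * cos (snd z), exp (fst z) * sin (snd z)).

Definition polar (r th : R) : C := (r * cos th, r * sin th).

Definition CRInt (f : R -> C) (a b : R) : C :=
  (RInt (fun t => fst (f t)) a b, RInt (fun t => snd (f t)) a b).

Definition holo_disk (f : C -> C) : Prop :=
  forall z : C, Disk z -> ex_derive f z.

Definition E1norm (phi : C -> C) : Rbar :=
  Lub_Rbar (fun x => exists z, Disk z /\ x = Cmod (phi z) * (1 - Cmod z ^ 2)).

Definition InE1 (phi : C -> C) : Prop := holo_disk phi /\ is_finite (E1norm phi).

Definition E1dist (phi psi : C -> C) : Rbar :=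
  E1norm (fun z => (phi z - psi z)%C).

(* ---------- Riemann sphere  C ∪ {oo} = option C, chordal metric ---------- *)
Definition chord (p q : option C) : R :=
  match p, q with
  | Some z, Some w => 2 * Cmod (z - w)%C / sqrt ((1 + Cmod z ^ 2) * (1 + Cmod w ^ 2))
  | Some z, None | None, Some z => 2 / sqrt (1 + Cmod z ^ 2)
  | None, None => 0
  end.

Definition sph_continuous (F : option C -> option C) : Prop :=
  forall p (eps : R), 0 < eps -> exists d, 0 < d /\
    forall q, chord p q < d -> chord (F p) (F q) < eps.

Definition sph_homeo (F : option C -> option C) : Prop :=
  exists G : option C -> option C,
    (forall p, G (F p) = p) /\ (forall p, F (G p) = p) /\
    sph_continuous F /\ sph_continuous G.

(* Metric definition of quasiconformality (Väisälä): the linear dilatation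
   H(z,F) = limsup_{r->0} max_{|w-z|=r}|F w - F z| / min_{|w-z|=r}|F w - F z|
   is bounded on C \ F^{-1}(oo); written out with an explicit constant. *)
Definition sph_qc (F : option C -> option C) : Prop :=
  exists K : R, forall z a, F (Some z) = Some a ->
    exists r0, 0 < r0 /\ forall r, 0 < r < r0 ->
      forall w1 w2, Cmod (w1 - z)%C = r -> Cmod (w2 - z)%C = r ->
        exists a1 a2, F (Some w1) = Some a1 /\ F (Some w2) = Some a2 /\
          Cmod (a1 - a)%C <= K * Cmod (a2 - a)%C.

Definition Sq (f : C -> C) : Prop :=
  holo_disk f /\
  (forall z w, Disk z -> Disk w -> f z = f w -> z = w) /\
  (exists M, forall z, Disk z -> Cmod (f z) <= M) /\
  f (RtoC 0) = RtoC 0 /\ is_derive f (RtoC 0) (RtoC 1) /\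
  exists F : option C -> option C,
    sph_homeo F /\ sph_qc F /\ forall z, Disk z -> F (Some z) = Some (f z).

Definition IsN (f psi : C -> C) : Prop :=
  exists f1 f2 : C -> C, forall z, Disk z ->
    is_derive f z (f1 z) /\ is_derive f1 z (f2 z) /\ psi z = (f2 z / f1 z)%C.

Definition Tset (psi : C -> C) : Prop := exists f, Sq f /\ IsN f psi.

Definition Tclos (phi : C -> C) : Prop :=
  InE1 phi /\ forall eps : R, 0 < eps ->
    exists psi, Tset psi /\ Rbar_lt (E1dist psi phi) (Finite eps).

(* g_phi(z) = int_0^z phi(w) dw  (along the segment [0,z]) *)
Definition gphi (phi : C -> C) (z : C) : C :=
  CRInt (fun t => (phi (RtoC t * z) * z)%C) 0 1.

(* f_phi(z) = int_0^z exp(g_phi(zeta)) dzeta ; so f_phi' = exp(g_phi),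
   and g_phi is the branch of log f_phi' with value 0 at 0. *)
Definition fphi (phi : C -> C) (z : C) : C :=
  CRInt (fun s => (cexp (gphi phi (RtoC s * z)) * z)%C) 0 1.

Definition limsup_left1 (h : R -> R) : Rbar :=
  Glb_Rbar (fun y => exists d, 0 < d /\
     Lub_Rbar (fun x => exists r, 1 - d < r < 1 /\ x = h r) = Finite y).

(* beta_f(tau), given L = log f' (branch with L 0 = 0):
   limsup_{r->1^-} log( int_{-pi}^{pi} |exp(tau L(r e^{i th}))| dth ) / |log(1-r)| *)
Definition beta_log (L : C -> C) (tau : C) : Rbar :=
  limsup_left1 (fun r =>
    ln (RInt (fun th => Cmod (cexp (tau * L (polar r th))%C)) (- PI) PI)
    / Rabs (ln (1 - r))).

(* I(phi) = beta_{f_phi}(tau), using log f_phi' = g_phi *)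
Definition Ifun (tau : C) (phi : C -> C) : Rbar := beta_log (gphi phi) tau.

Definition Rbar_nbhd (l : Rbar) (P : Rbar -> Prop) : Prop :=
  match l with
  | Finite x => exists eps, 0 < eps /\ forall y : R, Rabs (y - x) < eps -> P (Finite y)
  | p_infty => exists M : R, forall y : Rbar, Rbar_lt (Finite M) y -> P y
  | m_infty => exists M : R, forall y : Rbar, Rbar_lt y (Finite M) -> P y
  end.

(* Main.v *)
Require Import Defs.
From Stdlib Require Import Reals Lra Classical ClassicalEpsilon.
From Coquelicot Require Import Coquelicot.
Open Scope R_scope.

Lemma ball_C (z w : C) (e : R) : @ball C_UniformSpace z e w <-> Rabs (fst w - fst z) < e /\ Rabs (snd w - snd z) < e.
Proof. destruct z, w. unfold ball; simpl. unfold prod_ball, AbsRing_ball, abs, minus, plus, opp; simpl. tauto. Qed.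

Lemma holo_cont (f : C -> C) (z : C) : ex_derive f z ->
  forall eps, 0 < eps -> exists eta, 0 < eta /\ forall w, Cmod (w - z) < eta -> Cmod (f w - f z) < eps.
Proof.
  intros Hd eps Heps.
  apply ex_derive_continuous in Hd.
  assert (He2 : 0 < eps / 2) by lra.
  destruct (proj1 (filterlim_locally _ _) Hd (mkposreal _ He2)) as [e He].
  exists e. split. apply cond_pos.
  intros w Hw. specialize (He w).
  assert (Hb : @ball (AbsRing_UniformSpace C_AbsRing) z e w).
  { unfold ball; simpl. unfold AbsRing_ball. exact Hw. }
  specialize (He Hb). apply ball_C in He. simpl in He.
  pose proof (Cmod_2Rmax (f w - f z)%C).
  destruct (f w), (f z); simpl in *.
  destruct He as [He1 He3].
  unfold ball in He1, He3; simpl in He1, He3; unfold AbsRing_ball, abs, minus, plus, opp in He1, He3; simpl in He1, He3.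
  assert (Rmax (Rabs (r + - r1)) (Rabs (r0 + - r2)) < eps/2).
  { unfold Rmax; destruct Rle_dec; lra. }
  assert (sqrt 2 < 2). { pose proof (sqrt_sqrt 2 ltac:(lra)); pose proof (sqrt_pos 2); nra. }
  assert (0 <= Rmax (Rabs (r + - r1)) (Rabs (r0 + - r2))). { eapply Rle_trans; [apply Rabs_pos| apply Rmax_l]. }
  assert (0 <= sqrt 2) by apply sqrt_pos.
  unfold Cminus, Cplus, Copp in *; simpl in *. nra.
Qed.

Lemma ed_cont (f : R -> R) t :
  (forall eps, 0 < eps -> exists eta, 0 < eta /\ forall u, Rabs (u - t) < eta -> Rabs (f u - f t) < eps) ->
  continuity_pt f t.
Proof.
  intros H eps Heps. destruct (H eps Heps) as [eta [He Hf]].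
  exists eta. split; [exact He|]. intros x [_ Hx]. unfold R_dist in *. simpl in *. unfold R_dist. apply Hf. exact Hx.
Qed.

Lemma ed_cont' (f : R -> R) t :
  (forall eps, 0 < eps -> exists eta, 0 < eta /\ forall u, Rabs (u - t) < eta -> Rabs (f u - f t) < eps) ->
  continuous f t.
Proof. intros H. apply continuity_pt_filterlim. apply ed_cont. exact H. Qed.

Lemma param_cont (F : R -> R -> R) th0 :
  (forall t th, 0 <= t <= 1 -> forall eps, 0 < eps -> exists eta, 0 < eta /\
     forall u v, Rabs (u - t) < eta -> Rabs (v - th) < eta -> Rabs (F u v - F t th) < eps) ->
  continuity_pt (fun th => RInt (fun t => F t th) 0 1) th0.
Proof.
  intros H.
  assert (Hint : forall th, ex_RInt (fun t => F t th) 0 1).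
  { intros th. apply (ex_RInt_continuous (V:=R_CompleteNormedModule)). intros z Hz.
    rewrite Rmin_left in Hz by lra. rewrite Rmax_right in Hz by lra.
    apply ed_cont'. intros eps Heps. destruct (H z th Hz eps Heps) as [eta [He Hf]].
    exists eta. split; [exact He|]. intros u Hu. apply Hf; [exact Hu|]. rewrite Rminus_eq_0, Rabs_R0. exact He. }
  apply ed_cont. intros eps Heps.
  set (e := eps / 2).
  assert (He : 0 < e) by (unfold e; lra).
  assert (Hch : forall t, {eta : posreal | 0 <= t <= 1 -> forall u v, Rabs (u - t) < eta ->
        Rabs (v - th0) < eta -> Rabs (F u v - F t th0) < e / 2}).
  { intro t. apply constructive_indefinite_description.
    destruct (classic (0 <= t <= 1)) as [Ht|Ht].
    - destruct (H t th0 Ht (e/2) ltac:(lra)) as [eta [Heta Hf]].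
      exists (mkposreal eta Heta). intros _. exact Hf.
    - exists (mkposreal 1 Rlt_0_1). intros; contradiction. }
  set (delta := fun t => proj1_sig (Hch t)).
  destruct (compactness_value_1d 0 1 delta) as [d Hd].
  exists d. split; [apply cond_pos|].
  intros th Hth.
  assert (Hpt : forall t, 0 <= t <= 1 -> Rabs (F t th - F t th0) < e).
  { intros t Ht. specialize (Hd t Ht). apply NNPP. intro Hn. apply Hd. intros [t' [Ht' [Htt Hdt]]].
    apply Hn.
    pose proof (proj2_sig (Hch t') Ht') as Hc. fold (delta t') in Hc.
    pose proof (Hc t th Htt ltac:(lra)) as H1.
    pose proof (Hc t th0 Htt ltac:(rewrite Rminus_eq_0, Rabs_R0; apply cond_pos)) as H2.
    revert H1 H2. unfold Rabs; repeat destruct Rcase_abs; lra. }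
  assert (Eq : RInt (fun t => F t th) 0 1 - RInt (fun t => F t th0) 0 1 = RInt (fun t => F t th - F t th0) 0 1).
  { symmetry. apply (RInt_minus (V:=R_CompleteNormedModule)); apply Hint. }
  rewrite Eq.
  assert (Hm : ex_RInt (fun t => F t th - F t th0) 0 1).
  { apply (ex_RInt_minus (V:=R_CompleteNormedModule)); apply Hint. }
  assert (L1 : RInt (fun t => F t th - F t th0) 0 1 <= RInt (fun _ => e) 0 1).
  { apply RInt_le; [lra|exact Hm|apply ex_RInt_const|]. intros x Hx.
    specialize (Hpt x ltac:(lra)). revert Hpt. unfold Rabs; destruct Rcase_abs; lra. }
  assert (L2 : RInt (fun _ => -e) 0 1 <= RInt (fun t => F t th - F t th0) 0 1).
  { apply RInt_le; [lra|apply ex_RInt_const|exact Hm|]. intros x Hx.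
    specialize (Hpt x ltac:(lra)). revert Hpt. unfold Rabs; destruct Rcase_abs; lra. }
  rewrite !RInt_const in L1, L2. unfold scal in L1, L2; simpl in L1, L2. unfold mult in L1, L2; simpl in L1, L2.
  revert L1 L2. generalize (RInt (fun t => F t th - F t th0) 0 1). intros r L1 L2.
  unfold e in *. unfold Rabs; destruct Rcase_abs; lra.
Qed.

Lemma cs_ineq (a b x y : R) : a * x + b * y <= Cmod (a, b) * Cmod (x, y).
Proof.
  unfold Cmod; simpl. rewrite <- sqrt_mult by nra.
  destruct (Rle_dec (a*x+b*y) 0) as [Hn|Hp]. { pose proof (sqrt_pos ((a * (a * 1) + b * (b * 1)) * (x * (x * 1) + y * (y * 1)))). lra. }
  rewrite <- (sqrt_Rsqr (a*x+b*y)) by lra. apply sqrt_le_1_alt. pose proof (Rle_0_sqr (a*y-b*x)). unfold Rsqr in *. nra.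
Qed.

Lemma CRInt_bound (f : R -> C) (g : R -> R) :
  ex_RInt (fun t => fst (f t)) 0 1 -> ex_RInt (fun t => snd (f t)) 0 1 -> ex_RInt g 0 1 ->
  (forall t, 0 < t < 1 -> Cmod (f t) <= g t) -> Cmod (CRInt f 0 1) <= RInt g 0 1.
Proof.
  intros H1 H2 H3 Hb. unfold CRInt.
  set (a := RInt (fun t => fst (f t)) 0 1). set (b := RInt (fun t => snd (f t)) 0 1).
  set (m := Cmod (a, b)).
  assert (HG : 0 <= RInt g 0 1).
  { apply RInt_ge_0; [lra|exact H3|]. intros x Hx. eapply Rle_trans; [apply Cmod_ge_0|apply Hb; exact Hx]. }
  assert (Hsq : a * a + b * b <= m * RInt g 0 1).
  { assert (E : a * a + b * b = RInt (fun t => a * fst (f t) + b * snd (f t)) 0 1).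
    { rewrite (RInt_plus (V:=R_CompleteNormedModule) (fun t => a * fst (f t)) (fun t => b * snd (f t))).
      2,3: apply (ex_RInt_scal (V:=R_CompleteNormedModule)); assumption.
      rewrite (RInt_scal (V:=R_CompleteNormedModule) (fun t => fst (f t))) by assumption.
      rewrite (RInt_scal (V:=R_CompleteNormedModule) (fun t => snd (f t))) by assumption.
      reflexivity. }
    rewrite E.
    rewrite <- (RInt_scal (V:=R_CompleteNormedModule) g) by assumption.
    apply RInt_le; [lra| | |].
    - apply (ex_RInt_plus (V:=R_CompleteNormedModule)); apply (ex_RInt_scal (V:=R_CompleteNormedModule)); assumption.
    - apply (ex_RInt_scal (V:=R_CompleteNormedModule)); assumption.
    - intros x Hx. unfold scal; simpl; unfold mult; simpl.
      pose proof (cs_ineq a b (fst (f x)) (snd (f x))). rewrite <- surjective_pairing in H.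
      pose proof (Hb x Hx). assert (0 <= m) by apply Cmod_ge_0. eapply Rle_trans; [exact H|]. apply Rmult_le_compat_l; assumption. }
  assert (Hm2 : m * m = a * a + b * b).
  { unfold m, Cmod; simpl. rewrite sqrt_sqrt by nra. ring. }
  assert (0 <= m) by apply Cmod_ge_0.
  fold m. nra.
Qed.

Ltac ceq := apply injective_projections; simpl; ring.

Lemma Cmod_RtoC_mult t z : Cmod (RtoC t * z) = Rabs t * Cmod z.
Proof. rewrite Cmod_mult, Cmod_R. reflexivity. Qed.

Lemma comp_cont (f : R -> C) t :
  (forall eps, 0 < eps -> exists eta, 0 < eta /\ forall u, Rabs (u - t) < eta -> Cmod (f u - f t) < eps) ->
  continuous (fun u => fst (f u)) t /\ continuous (fun u => snd (f u)) t.
Proof.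
  intros H. split; apply ed_cont'; intros eps Heps; destruct (H eps Heps) as [eta [He Hf]];
  exists eta; split; auto; intros u Hu; specialize (Hf u Hu);
  pose proof (Rmax_Cmod (f u - f t)%C); destruct (f u), (f t); simpl in *;
  eapply Rle_lt_trans; try exact Hf; eapply Rle_trans; try exact H0; [apply Rmax_l|apply Rmax_r].
Qed.

Lemma integrand_ed (phi : C -> C) z t : holo_disk phi -> Cmod z < 1 -> 0 <= t <= 1 ->
  forall eps, 0 < eps -> exists eta, 0 < eta /\ forall u, Rabs (u - t) < eta ->
    Cmod ((phi (RtoC u * z) * z) - (phi (RtoC t * z) * z))%C < eps.
Proof.
  intros Hh Hz Ht eps Heps.
  assert (Hs : 0 <= Cmod z) by apply Cmod_ge_0.
  assert (HD : Disk (RtoC t * z)%C).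
  { unfold Disk. rewrite Cmod_RtoC_mult. rewrite Rabs_pos_eq by lra. nra. }
  destruct (holo_cont phi _ (Hh _ HD) (eps / (Cmod z + 1))) as [eta [He Hf]].
  { apply Rdiv_lt_0_compat; lra. }
  exists (eta / (Cmod z + 1)). split. { apply Rdiv_lt_0_compat; lra. }
  intros u Hu.
  replace ((phi (RtoC u * z) * z) - (phi (RtoC t * z) * z))%C with ((phi (RtoC u * z) - phi (RtoC t * z)) * z)%C by ceq.
  rewrite Cmod_mult.
  assert (Hc : Cmod (RtoC u * z - RtoC t * z)%C < eta).
  { replace (RtoC u * z - RtoC t * z)%C with (RtoC (u - t) * z)%C by ceq.
    rewrite Cmod_RtoC_mult.
    apply Rmult_lt_compat_r with (r := Cmod z + 1) in Hu; [|lra].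
    unfold Rdiv in Hu. rewrite Rmult_assoc, Rinv_l in Hu by lra. pose proof (Rabs_pos (u - t)). nra. }
  specialize (Hf _ Hc).
  pose proof (Cmod_ge_0 (phi (RtoC u * z) - phi (RtoC t * z))%C).
  apply Rmult_lt_compat_r with (r := Cmod z + 1) in Hf; [|lra].
  unfold Rdiv in Hf. rewrite Rmult_assoc, Rinv_l in Hf by lra. nra.
Qed.

Lemma int_log (d s : R) : 0 <= s < 1 ->
  is_RInt (fun t => d * s / (1 - t * s)) 0 1 (d * - ln (1 - s)).
Proof.
  intros Hs.
  replace (d * - ln (1 - s)) with (minus (d * - ln (1 - 1 * s)) (d * - ln (1 - 0 * s))).
  2: { unfold minus, plus, opp; simpl. rewrite Rmult_0_l, Rminus_0_r, ln_1, Rmult_1_l. ring. }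
  apply (is_RInt_derive (V:=R_CompleteNormedModule) (fun t => d * - ln (1 - t * s))).
  - intros x Hx. rewrite Rmin_left in Hx by lra. rewrite Rmax_right in Hx by lra.
    auto_derive. nra. field. nra.
  - intros x Hx. rewrite Rmin_left in Hx by lra. rewrite Rmax_right in Hx by lra.
    apply (ex_derive_continuous (fun t => d * s / (1 - t * s))). auto_derive. nra.
Qed.

Lemma integrand_int (phi : C -> C) z : holo_disk phi -> Cmod z < 1 ->
  ex_RInt (fun t => fst (phi (RtoC t * z) * z)%C) 0 1 /\ ex_RInt (fun t => snd (phi (RtoC t * z) * z)%C) 0 1.
Proof.
  intros Hh Hz. split; apply (ex_RInt_continuous (V:=R_CompleteNormedModule)); intros t Ht;
  rewrite Rmin_left in Ht by lra; rewrite Rmax_right in Ht by lra;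
  destruct (comp_cont (fun u => (phi (RtoC u * z) * z)%C) t (integrand_ed phi z t Hh Hz Ht)); assumption.
Qed.

Lemma gphi_diff (phi1 phi2 : C -> C) (d : R) (z : C) :
  holo_disk phi1 -> holo_disk phi2 -> 0 <= d ->
  (forall w, Disk w -> Cmod (phi1 w - phi2 w)%C * (1 - Cmod w ^ 2) <= d) ->
  Cmod z < 1 -> Cmod (gphi phi1 z - gphi phi2 z)%C <= d * - ln (1 - Cmod z).
Proof.
  intros H1 H2 Hd Hb Hz.
  set (s := Cmod z) in *. assert (Hs : 0 <= s) by apply Cmod_ge_0.
  destruct (integrand_int phi1 z H1 Hz) as [A1 A2].
  destruct (integrand_int phi2 z H2 Hz) as [B1 B2].
  set (f := fun t => ((phi1 (RtoC t * z) * z) - (phi2 (RtoC t * z) * z))%C).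
  assert (E : (gphi phi1 z - gphi phi2 z)%C = CRInt f 0 1).
  { unfold gphi, CRInt, f. apply injective_projections.
    - change (RInt (fun t => fst (phi1 (RtoC t * z) * z)%C) 0 1 - RInt (fun t => fst (phi2 (RtoC t * z) * z)%C) 0 1
        = RInt (fun t => fst (phi1 (RtoC t * z) * z)%C - fst (phi2 (RtoC t * z) * z)%C) 0 1).
      symmetry. apply (RInt_minus (V:=R_CompleteNormedModule)); assumption.
    - change (RInt (fun t => snd (phi1 (RtoC t * z) * z)%C) 0 1 - RInt (fun t => snd (phi2 (RtoC t * z) * z)%C) 0 1
        = RInt (fun t => snd (phi1 (RtoC t * z) * z)%C - snd (phi2 (RtoC t * z) * z)%C) 0 1).
      symmetry. apply (RInt_minus (V:=R_CompleteNormedModule)); assumption. }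
  rewrite E.
  pose proof (int_log d s (conj Hs Hz)) as HI.
  rewrite <- (is_RInt_unique _ _ _ _ HI).
  apply CRInt_bound.
  - apply (ex_RInt_minus (V:=R_CompleteNormedModule)); assumption.
  - apply (ex_RInt_minus (V:=R_CompleteNormedModule)); assumption.
  - eexists; exact HI.
  - intros t Ht. unfold f.
    replace ((phi1 (RtoC t * z) * z) - (phi2 (RtoC t * z) * z))%C with ((phi1 (RtoC t * z) - phi2 (RtoC t * z)) * z)%C by ceq.
    rewrite Cmod_mult. fold s.
    assert (HD : Disk (RtoC t * z)%C).
    { unfold Disk. rewrite Cmod_RtoC_mult. rewrite Rabs_pos_eq by lra. fold s. apply Rle_lt_trans with (1 * s); [apply Rmult_le_compat_r; lra | fold s in Hz; lra]. }
    specialize (Hb _ HD). rewrite Cmod_RtoC_mult, Rabs_pos_eq in Hb by lra. fold s in Hb.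
    set (D := Cmod (phi1 (RtoC t * z) - phi2 (RtoC t * z))%C) in *.
    assert (HD0 : 0 <= D) by apply Cmod_ge_0.
    assert (Hts : 0 <= t * s < 1) by nra.
    assert (D * (1 - t * s) <= d) by nra.
    unfold Rdiv. apply Rmult_le_reg_r with (1 - t * s); [lra|].
    rewrite (Rmult_assoc (d * s)), Rinv_l by lra. nra.
Qed.

Lemma cont_ed (f : R -> R) x : continuity_pt f x ->
  forall eps, 0 < eps -> exists eta, 0 < eta /\ forall y, Rabs (y - x) < eta -> Rabs (f y - f x) < eps.
Proof.
  intros H eps Heps. destruct (H eps Heps) as [eta [He Hf]]. exists eta. split; auto.
  intros y Hy. destruct (Req_dec y x) as [->|Hne].
  - rewrite Rminus_eq_0, Rabs_R0. exact Heps.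
  - apply (Hf y). split; [split; [exact I| auto]|exact Hy].
Qed.

Lemma Cmod_le_sum (x y : R) : Cmod (x, y) <= Rabs x + Rabs y.
Proof.
  unfold Cmod; simpl. rewrite <- (sqrt_Rsqr (Rabs x + Rabs y)) by (pose proof (Rabs_pos x); pose proof (Rabs_pos y); lra).
  apply sqrt_le_1_alt. unfold Rsqr.
  pose proof (Rabs_pos x); pose proof (Rabs_pos y).
  pose proof (Rsqr_abs x). pose proof (Rsqr_abs y). unfold Rsqr in *. nra.
Qed.

Lemma Cmod_cexp w : Cmod (cexp w) = exp (fst w).
Proof.
  unfold cexp, Cmod; simpl. pose proof (sin2_cos2 (snd w)). unfold Rsqr in H.
  replace (exp (fst w) * cos (snd w) * (exp (fst w) * cos (snd w) * 1) +
           exp (fst w) * sin (snd w) * (exp (fst w) * sin (snd w) * 1)) with (Rsqr (exp (fst w))).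
  - apply sqrt_Rsqr. apply Rlt_le, exp_pos.
  - unfold Rsqr. replace (exp (fst w) * exp (fst w)) with (exp (fst w) * exp (fst w) * (sin (snd w) * sin (snd w) + cos (snd w) * cos (snd w))) by (rewrite H; ring). ring.
Qed.

Lemma polar_mod r th : Cmod (polar r th) = Rabs r.
Proof.
  unfold polar, Cmod; simpl. pose proof (sin2_cos2 th). unfold Rsqr in H.
  rewrite <- sqrt_Rsqr_abs. f_equal. unfold Rsqr.
  replace (r * r) with (r * r * (sin th * sin th + cos th * cos th)) by (rewrite H; ring). ring.
Qed.

Lemma polar_ed r th : Rabs r <= 1 ->
  forall g, 0 < g -> exists eta, 0 < eta /\ forall v, Rabs (v - th) < eta -> Cmod (polar r v - polar r th)%C < g.
Proof.
  intros Hr g Hg.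
  destruct (cont_ed cos th (continuity_cos th) (g/2) ltac:(lra)) as [e1 [He1 H1]].
  destruct (cont_ed sin th (continuity_sin th) (g/2) ltac:(lra)) as [e2 [He2 H2]].
  exists (Rmin e1 e2). split. { unfold Rmin; destruct Rle_dec; lra. }
  intros v Hv.
  assert (Hv1 : Rabs (v - th) < e1) by (eapply Rlt_le_trans; [exact Hv| apply Rmin_l]).
  assert (Hv2 : Rabs (v - th) < e2) by (eapply Rlt_le_trans; [exact Hv| apply Rmin_r]).
  specialize (H1 v Hv1). specialize (H2 v Hv2).
  replace (polar r v - polar r th)%C with (r * (cos v - cos th), r * (sin v - sin th)) by (unfold polar; ceq).
  eapply Rle_lt_trans; [apply Cmod_le_sum|]. rewrite !Rabs_mult.
  pose proof (Rabs_pos (cos v - cos th)). pose proof (Rabs_pos (sin v - sin th)). pose proof (Rabs_pos r). nra.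
Qed.

Lemma joint_ed (phi : C -> C) r t th : holo_disk phi -> Rabs r < 1 -> 0 <= t <= 1 ->
  forall eps, 0 < eps -> exists eta, 0 < eta /\ forall u v, Rabs (u - t) < eta -> Rabs (v - th) < eta ->
    Cmod (phi (RtoC u * polar r v) * polar r v - phi (RtoC t * polar r th) * polar r th)%C < eps.
Proof.
  intros Hh Hr Ht eps Heps.
  set (P0 := polar r th). set (Q0 := (RtoC t * P0)%C).
  assert (HD : Disk Q0).
  { unfold Disk, Q0, P0. rewrite Cmod_RtoC_mult, polar_mod, Rabs_pos_eq by lra. pose proof (Rabs_pos r). nra. }
  set (K := Cmod (phi Q0)). assert (HK : 0 <= K) by apply Cmod_ge_0.
  destruct (holo_cont phi Q0 (Hh _ HD) (eps/2) ltac:(lra)) as [e1 [He1 H1]].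
  set (g := Rmin (e1/2) (eps / (2 * (K + 1)))).
  assert (Hg : 0 < g). { unfold g, Rmin; destruct Rle_dec; [lra|]. apply Rdiv_lt_0_compat; lra. }
  assert (Hg1 : g <= e1/2) by apply Rmin_l.
  assert (Hg2 : g <= eps / (2 * (K + 1))) by apply Rmin_r.
  destruct (polar_ed r th ltac:(lra) g Hg) as [e2 [He2 H2]].
  exists (Rmin (e1/2) e2). split. { unfold Rmin; destruct Rle_dec; lra. }
  intros u v Hu Hv.
  assert (Hu' : Rabs (u - t) < e1/2) by (eapply Rlt_le_trans; [exact Hu|apply Rmin_l]).
  assert (Hv' : Rabs (v - th) < e2) by (eapply Rlt_le_trans; [exact Hv|apply Rmin_r]).
  specialize (H2 v Hv'). fold P0 in H2.
  set (Pv := polar r v) in *.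
  assert (HPv : Cmod Pv = Rabs r) by apply polar_mod.
  assert (HQ : Cmod (RtoC u * Pv - Q0)%C < e1).
  { replace (RtoC u * Pv - Q0)%C with (RtoC (u - t) * Pv + RtoC t * (Pv - P0))%C by (unfold Q0; ceq).
    eapply Rle_lt_trans; [apply Cmod_triangle|]. rewrite !Cmod_RtoC_mult, HPv. rewrite (Rabs_pos_eq t) by lra.
    pose proof (Rabs_pos r). pose proof (Rabs_pos (u - t)). pose proof (Cmod_ge_0 (Pv - P0)%C). nra. }
  specialize (H1 _ HQ).
  replace (phi (RtoC u * Pv) * Pv - phi Q0 * P0)%C with ((phi (RtoC u * Pv) - phi Q0) * Pv + phi Q0 * (Pv - P0))%C by ceq.
  eapply Rle_lt_trans; [apply Cmod_triangle|]. rewrite !Cmod_mult, HPv. fold K.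
  pose proof (Rabs_pos r). pose proof (Cmod_ge_0 (phi (RtoC u * Pv) - phi Q0)%C). pose proof (Cmod_ge_0 (Pv - P0)%C).
  assert (K * Cmod (Pv - P0)%C <= K * g) by (apply Rmult_le_compat_l; lra).
  assert (K * g <= K * (eps / (2 * (K + 1)))) by (apply Rmult_le_compat_l; lra).
  assert (K * (eps / (2 * (K + 1))) < eps / 2).
  { unfold Rdiv. rewrite Rinv_mult. apply Rmult_lt_reg_r with (2 * (K + 1)); [lra|].
    field_simplify; [nra|lra]. }
  nra.
Qed.

Lemma fst_le (a b : C) : Rabs (fst a - fst b) <= Cmod (a - b)%C.
Proof. pose proof (Rmax_Cmod (a - b)%C). destruct a, b; simpl in *. eapply Rle_trans; [|exact H]. apply Rmax_l. Qed.
Lemma snd_le (a b : C) : Rabs (snd a - snd b) <= Cmod (a - b)%C.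
Proof. pose proof (Rmax_Cmod (a - b)%C). destruct a, b; simpl in *. eapply Rle_trans; [|exact H]. apply Rmax_r. Qed.

Lemma circ_cont (phi : C -> C) (tau : C) r : holo_disk phi -> Rabs r < 1 ->
  forall th, continuous (fun th => Cmod (cexp (tau * gphi phi (polar r th))%C)) th.
Proof.
  intros Hh Hr th.
  assert (C1 : continuity_pt (fun th => RInt (fun t => fst (phi (RtoC t * polar r th) * polar r th)%C) 0 1) th).
  { apply param_cont. intros t th' Ht eps Heps.
    destruct (joint_ed phi r t th' Hh Hr Ht eps Heps) as [eta [He Hf]].
    exists eta. split; auto. intros u v Hu Hv. eapply Rle_lt_trans; [apply fst_le|]. apply Hf; auto. }
  assert (C2 : continuity_pt (fun th => RInt (fun t => snd (phi (RtoC t * polar r th) * polar r th)%C) 0 1) th).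
  { apply param_cont. intros t th' Ht eps Heps.
    destruct (joint_ed phi r t th' Hh Hr Ht eps Heps) as [eta [He Hf]].
    exists eta. split; auto. intros u v Hu Hv. eapply Rle_lt_trans; [apply snd_le|]. apply Hf; auto. }
  apply (continuous_ext (fun th => exp (fst tau * RInt (fun t => fst (phi (RtoC t * polar r th) * polar r th)%C) 0 1
                                   - snd tau * RInt (fun t => snd (phi (RtoC t * polar r th) * polar r th)%C) 0 1))).
  { intros x. rewrite Cmod_cexp. reflexivity. }
  apply continuity_pt_filterlim.
  apply (continuity_pt_comp (fun th => fst tau * RInt (fun t => fst (phi (RtoC t * polar r th) * polar r th)%C) 0 1
                                   - snd tau * RInt (fun t => snd (phi (RtoC t * polar r th) * polar r th)%C) 0 1) exp).
  - apply continuity_pt_minus; apply continuity_pt_mult; auto; apply continuity_pt_const; intros a b; reflexivity.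
  - apply derivable_continuous_pt, derivable_pt_exp.
Qed.

Lemma ln_le' x y : 0 < x -> x <= y -> ln x <= ln y.
Proof. intros Hx Hxy. destruct (Req_dec x y) as [->|Hn]; [lra|]. left. apply ln_increasing; lra. Qed.

Lemma exp_le' x y : x <= y -> exp x <= exp y.
Proof. intros H. destruct (Req_dec x y) as [->|Hn]; [lra|]. left. apply exp_increasing; lra. Qed.

Definition hfun (tau : C) (phi : C -> C) (r : R) : R :=
  ln (RInt (fun th => Cmod (cexp (tau * gphi phi (polar r th))%C)) (- PI) PI) / Rabs (ln (1 - r)).

Lemma h_cmp (phi1 phi2 : C -> C) (tau : C) (d : R) :
  holo_disk phi1 -> holo_disk phi2 -> 0 <= d ->
  (forall w, Disk w -> Cmod (phi1 w - phi2 w)%C * (1 - Cmod w ^ 2) <= d) ->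
  forall r, 0 < r < 1 -> hfun tau phi1 r <= hfun tau phi2 r + Cmod tau * d.
Proof.
  intros H1 H2 Hd Hb r Hr. unfold hfun.
  assert (Hr' : Rabs r < 1) by (rewrite Rabs_pos_eq; lra).
  set (f1 := fun th => Cmod (cexp (tau * gphi phi1 (polar r th))%C)).
  set (f2 := fun th => Cmod (cexp (tau * gphi phi2 (polar r th))%C)).
  set (L := - ln (1 - r)).
  assert (HL : 0 < L). { unfold L. assert (ln (1 - r) < ln 1) by (apply ln_increasing; lra). rewrite ln_1 in H. lra. }
  assert (HaL : Rabs (ln (1 - r)) = L). { unfold L in *. rewrite Rabs_left; lra. }
  rewrite HaL.
  set (E := exp (Cmod tau * d * L)).
  assert (Hc1 : forall x, continuous f1 x) by (apply circ_cont; auto).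
  assert (Hc2 : forall x, continuous f2 x) by (apply circ_cont; auto).
  assert (Hi1 : ex_RInt f1 (-PI) PI) by (apply (ex_RInt_continuous (V:=R_CompleteNormedModule)); auto).
  assert (Hi2 : ex_RInt f2 (-PI) PI) by (apply (ex_RInt_continuous (V:=R_CompleteNormedModule)); auto).
  pose proof PI_RGT_0.
  assert (P1 : 0 < RInt f1 (-PI) PI).
  { apply RInt_gt_0; [lra| |auto]. intros x _. unfold f1. rewrite Cmod_cexp. apply exp_pos. }
  assert (P2 : 0 < RInt f2 (-PI) PI).
  { apply RInt_gt_0; [lra| |auto]. intros x _. unfold f2. rewrite Cmod_cexp. apply exp_pos. }
  assert (Hle : RInt f1 (-PI) PI <= E * RInt f2 (-PI) PI).
  { rewrite <- (RInt_scal (V:=R_CompleteNormedModule) f2) by auto.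
    apply RInt_le; [lra|auto|apply (ex_RInt_scal (V:=R_CompleteNormedModule)); auto|].
    intros x _. unfold scal; simpl; unfold mult; simpl. unfold f1, f2, E. rewrite !Cmod_cexp.
    rewrite <- exp_plus. apply exp_le'.
    assert (Hg : Cmod (gphi phi1 (polar r x) - gphi phi2 (polar r x))%C <= d * L).
    { pose proof (gphi_diff phi1 phi2 d (polar r x) H1 H2 Hd Hb) as G.
      rewrite polar_mod, Rabs_pos_eq in G by lra. unfold L. apply G. lra. }
    set (G1 := gphi phi1 (polar r x)) in *. set (G2 := gphi phi2 (polar r x)) in *.
    assert (Hf : fst (tau * G1)%C = fst (tau * G2)%C + fst (tau * (G1 - G2))%C).
    { destruct tau, G1, G2; simpl; ring. }
    pose proof (re_le_Cmod (tau * (G1 - G2))%C). rewrite Cmod_mult in H0. simpl in H0.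
    assert (fst (tau * (G1 - G2))%C <= Cmod tau * (d * L)).
    { pose proof (Cmod_ge_0 tau). eapply Rle_trans; [|apply Rmult_le_compat_l; [lra|exact Hg]].
      eapply Rle_trans; [apply Rle_abs|]. exact H0. }
    rewrite Hf. lra. }
  assert (Hln : ln (RInt f1 (-PI) PI) <= Cmod tau * d * L + ln (RInt f2 (-PI) PI)).
  { eapply Rle_trans; [apply ln_le'; [exact P1|exact Hle]|]. rewrite ln_mult by (try apply exp_pos; exact P2).
    unfold E. rewrite ln_exp. lra. }
  unfold Rdiv. apply Rmult_le_reg_r with L; [exact HL|].
  rewrite Rmult_plus_distr_r, !Rmult_assoc, Rinv_l by lra. lra.
Qed.

Lemma glb_cmp (S1 S2 : R -> Prop) c :
  (forall y, S2 y -> exists y', S1 y' /\ y' <= y + c) ->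
  Rbar_le (Glb_Rbar S1) (Rbar_plus (Glb_Rbar S2) c).
Proof.
  intros H.
  assert (K : forall y, S2 y -> Rbar_le (Glb_Rbar S1) (Finite (y + c))).
  { intros y Hy. destruct (H y Hy) as [y' [Hy' Hle]].
    destruct (Glb_Rbar_correct S1) as [Hlb _].
    eapply Rbar_le_trans. apply Hlb. exact Hy'. simpl. exact Hle. }
  destruct (Glb_Rbar_correct S2) as [Hlb2 Hg2].
  destruct (Glb_Rbar S2) as [l2| |] eqn:E2; simpl.
  - destruct (Glb_Rbar S1) as [l1| |] eqn:E1; simpl; auto.
    + assert (Rbar_le (Finite (l1 - c)) (Finite l2)).
      { apply Hg2. intros x Hx. specialize (K x Hx). simpl in *. lra. }
      simpl in H0. lra.
    + exfalso. assert (Rbar_le p_infty (Finite l2)).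
      { apply Hg2. intros x Hx. specialize (K x Hx). simpl in K. contradiction. }
      simpl in H0. exact H0.
  - destruct (Glb_Rbar S1); simpl; auto.
  - destruct (Glb_Rbar S1) as [l1| |] eqn:E1; simpl; auto.
    + assert (Rbar_le (Finite (l1 - c - 1)) m_infty).
      { apply Hg2. intros x Hx. specialize (K x Hx). simpl in *. lra. }
      simpl in H0. exact H0.
    + assert (Rbar_le (Finite 0) m_infty).
      { apply Hg2. intros x Hx. specialize (K x Hx). simpl in K. contradiction. }
      simpl in H0. exact H0.
Qed.

Lemma limsup_cmp (h1 h2 : R -> R) c :
  (forall r, 0 < r < 1 -> h1 r <= h2 r + c) ->
  Rbar_le (limsup_left1 h1) (Rbar_plus (limsup_left1 h2) c).
Proof.
  intros H. unfold limsup_left1. apply glb_cmp.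
  intros y [d [Hd HU]].
  set (d1 := Rmin d 1).
  assert (Hd1 : 0 < d1) by (unfold d1, Rmin; destruct Rle_dec; lra).
  assert (Hd1' : d1 <= 1) by apply Rmin_r.
  assert (Hd1'' : d1 <= d) by apply Rmin_l.
  set (E1 := fun x => exists r, 1 - d1 < r < 1 /\ x = h1 r).
  destruct (Lub_Rbar_correct E1) as [Hub Hl].
  assert (Hup : Rbar_le (Lub_Rbar E1) (Finite (y + c))).
  { apply Hl. intros x [r [Hr ->]].
    destruct (Lub_Rbar_correct (fun x => exists r, 1 - d < r < 1 /\ x = h2 r)) as [Hub2 _].
    rewrite HU in Hub2.
    assert (h2 r <= y).
    { specialize (Hub2 (h2 r)). simpl in Hub2. apply Hub2. exists r. split; [lra|reflexivity]. }
    specialize (H r ltac:(lra)). simpl. lra. }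
  assert (Hlow : Rbar_le (Finite (h1 (1 - d1/2))) (Lub_Rbar E1)).
  { apply Hub. exists (1 - d1/2). split; [lra|reflexivity]. }
  destruct (Lub_Rbar E1) as [l| |] eqn:EL; simpl in Hup, Hlow; try contradiction.
  exists l. split; [|exact Hup].
  exists d1. split; [exact Hd1|]. exact EL.
Qed.

Lemma E1_pt (phi phi0 : C -> C) (d : R) : Rbar_lt (E1dist phi phi0) (Finite d) ->
  forall w, Disk w -> Cmod (phi w - phi0 w)%C * (1 - Cmod w ^ 2) <= d.
Proof.
  intros H w Hw. unfold E1dist, E1norm in H.
  destruct (Lub_Rbar_correct (fun x => exists z, Disk z /\ x = Cmod (phi z - phi0 z)%C * (1 - Cmod z ^ 2))) as [Hub _].
  specialize (Hub (Cmod (phi w - phi0 w)%C * (1 - Cmod w ^ 2)) (ex_intro _ w (conj Hw eq_refl))).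
  destruct (Lub_Rbar _); simpl in *; try contradiction; lra.
Qed.

Lemma Ifun_cmp (tau : C) (phi phi0 : C -> C) (d : R) : Tclos phi -> Tclos phi0 -> 0 <= d ->
  Rbar_lt (E1dist phi phi0) (Finite d) ->
  Rbar_le (Ifun tau phi) (Rbar_plus (Ifun tau phi0) (Cmod tau * d)) /\
  Rbar_le (Ifun tau phi0) (Rbar_plus (Ifun tau phi) (Cmod tau * d)).
Proof.
  intros [[H1 _] _] [[H0 _] _] Hd Hl.
  pose proof (E1_pt phi phi0 d Hl) as Hb.
  change (Ifun tau phi) with (limsup_left1 (hfun tau phi)).
  change (Ifun tau phi0) with (limsup_left1 (hfun tau phi0)).
  split; apply limsup_cmp; apply h_cmp; auto.
  intros w Hw. replace (phi0 w - phi w)%C with (- (phi w - phi0 w))%C by ceq. rewrite Cmod_opp. auto.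
Qed.

Theorem theorem3 (tau : C) :
  forall phi0 : C -> C, Tclos phi0 ->
  forall P : Rbar -> Prop, Rbar_nbhd (Ifun tau phi0) P ->
  exists delta : R, 0 < delta /\
    forall phi : C -> C, Tclos phi ->
      Rbar_lt (E1dist phi phi0) (Finite delta) -> P (Ifun tau phi).
Proof.
  intros phi0 Hc0 P HP.
  pose proof (Cmod_ge_0 tau) as Ht.
  destruct (Ifun tau phi0) as [x| |] eqn:EB; simpl in HP.
  - destruct HP as [eps [Heps HP]].
    exists (eps / (Cmod tau + 1)). split. { apply Rdiv_lt_0_compat; lra. }
    intros phi Hc Hl.
    assert (Hc' : Cmod tau * (eps / (Cmod tau + 1)) < eps).
    { apply Rmult_lt_reg_r with (Cmod tau + 1); [lra|]. unfold Rdiv.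
      rewrite Rmult_assoc, (Rmult_assoc eps), Rinv_l by lra. nra. }
    assert (Hd0 : 0 <= eps / (Cmod tau + 1)) by (apply Rlt_le, Rdiv_lt_0_compat; lra).
    destruct (Ifun_cmp tau phi phi0 _ Hc Hc0 Hd0 Hl) as [A1 A2].
    rewrite EB in A1, A2.
    destruct (Ifun tau phi) as [y| |]; simpl in A1, A2; try contradiction.
    apply HP. pose proof (Rmult_le_pos _ _ Ht Hd0). unfold Rabs; destruct Rcase_abs; lra.
  - destruct HP as [M HP]. exists 1. split; [lra|]. intros phi Hc Hl.
    destruct (Ifun_cmp tau phi phi0 1 Hc Hc0 ltac:(lra) Hl) as [A1 A2].
    rewrite EB in A1, A2.
    destruct (Ifun tau phi) as [y| |] eqn:EA; simpl in A1, A2; try contradiction.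
    apply HP. simpl. exact I.
  - destruct HP as [M HP]. exists 1. split; [lra|]. intros phi Hc Hl.
    destruct (Ifun_cmp tau phi phi0 1 Hc Hc0 ltac:(lra) Hl) as [A1 A2].
    rewrite EB in A1, A2.
    destruct (Ifun tau phi) as [y| |] eqn:EA; simpl in A1, A2; try contradiction.
    apply HP. simpl. exact I.
Qed.
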